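(* Let $p$ be an odd prime and let $X$ be a finite family of $4p-3$ lattice points in $\mathbb{Z}^2$ (repetitions allowed). Then \[ 3-2(p-1,X)-2(p,X)+(2p-1,X)+(2p,X)\equiv 0 \pmod p. \]
   Context: For a finite family $X$ of lattice points in $\mathbb{Z}^2$ (points may repeat; subsets are subfamilies, i.e. subsets of the index set) and an integer $n\ge 0$, $(n,X)$ denotes the number of $n$-element subfamilies of $X$ whose coordinatewise sum is congruent to $(0,0)$ modulo $p$. *)

(* Defs.v *)
From mathcomp Require Import all_boot all_order all_algebra.
Set Implicit Arguments. Unset Strict Implicit. Unset Printing Implicit Defensive.
Import GRing.Theory Num.Theory.
Local Open Scope ring_scope.

(* A finite family of lattice points in Z^2 with N members is a map from the
   index set 'I_N to int * int (repetitions allowed).  Subfamilies are subsets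
   of the index set. *)

Definition zero_sum_mod (p : nat) (N : nat) (X : 'I_N -> int * int)
  (S : {set 'I_N}) : bool :=
  (((\sum_(i in S) (X i).1) %% p%:Z)%Z == 0) &&
  (((\sum_(i in S) (X i).2) %% p%:Z)%Z == 0).

Definition nzs (p : nat) (n : nat) (N : nat) (X : 'I_N -> int * int) : nat :=
  #|[set S : {set 'I_N} | (#|S| == n) && zero_sum_mod p X S]|.

(* Main.v *)
Require Import Defs.
From mathcomp Require Import all_boot all_order all_algebra zify finfield ring.
Set Implicit Arguments. Unset Strict Implicit. Unset Printing Implicit Defensive.
Import GRing.Theory Num.Theory.
Local Open Scope ring_scope.

Section DegS.
Variables (R : comNzRingType) (I : finType).

Definition deg_le (k : nat) (h : {set I} -> R) :=
  exists c : {set I} -> R, (forall T : {set I}, (k < #|T|)%N -> c T = 0) /\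
    forall S, h S = \sum_(T : {set I} | T \subset S) c T.

Lemma deg_mono k k' h : (k <= k')%N -> deg_le k h -> deg_le k' h.
Proof.
move=> kk [c [c0 hc]]; exists c; split=> // T kT; apply: c0.
exact: leq_ltn_trans kT.
Qed.

Lemma deg_ext k h h' : (forall S, h S = h' S) -> deg_le k h -> deg_le k h'.
Proof. by move=> e [c [c0 hc]]; exists c; split=> // S; rewrite -e. Qed.

Lemma deg_const a : deg_le 0 (fun _ => a).
Proof.
exists (fun T => if T == set0 then a else 0); split.
  by move=> T; rewrite card_gt0 => /negbTE ->.
move=> S; rewrite (bigD1 set0) ?sub0set //= eqxx big1 ?addr0 //.
by move=> T /andP[_ /negbTE ->].
Qed.

Lemma deg_lin (a : I -> R) : deg_le 1 (fun S => \sum_(i in S) a i).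
Proof.
exists (fun T => \sum_i (if T == [set i] then a i else 0)); split.
  move=> T T1; apply: big1 => i _; case: eqP => // TE; by rewrite TE cards1 in T1.
move=> S; rewrite exchange_big /=.
rewrite big_mkcond /=; apply: eq_bigr => i _.
case: (boolP (i \in S)) => iS.
  rewrite (bigD1 [set i]) ?sub1set //= eqxx big1 ?addr0 //.
  by move=> T /andP[_ /negbTE ->].
rewrite big1 // => T TS; case: eqP => // TE.
by move: TS; rewrite TE sub1set (negbTE iS).
Qed.

Lemma deg_add k h1 h2 : deg_le k h1 -> deg_le k h2 -> deg_le k (fun S => h1 S + h2 S).
Proof.
move=> [c1 [c10 h1c]] [c2 [c20 h2c]]; exists (fun T => c1 T + c2 T); split.
  by move=> T kT; rewrite c10 ?c20 ?addr0.
by move=> S; rewrite big_split /= h1c h2c.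
Qed.

Lemma deg_opp k h : deg_le k h -> deg_le k (fun S => - h S).
Proof.
move=> [c [c0 hc]]; exists (fun T => - c T); split.
  by move=> T kT; rewrite c0 ?oppr0.
by move=> S; rewrite sumrN hc.
Qed.

Lemma deg_mul k1 k2 h1 h2 : deg_le k1 h1 -> deg_le k2 h2 ->
  deg_le (k1 + k2) (fun S => h1 S * h2 S).
Proof.
move=> [c1 [c10 h1c]] [c2 [c20 h2c]].
exists (fun U => \sum_(T1 : {set I}) \sum_(T2 : {set I})
   (if U == T1 :|: T2 then c1 T1 * c2 T2 else 0)); split.
  move=> U kU; apply: big1 => T1 _; apply: big1 => T2 _.
  case: eqP => // UE; move: kU; rewrite UE => kU.
  have : (k1 + k2 < #|T1| + #|T2|)%N.
    apply: (leq_trans kU); rewrite cardsU; exact: leq_subr.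
  case: (ltnP k1 #|T1|) => [/c10 -> |le1 lt]; first by rewrite mul0r.
  by rewrite c20 ?mulr0 //; lia.
move=> S; rewrite h1c h2c big_distrlr /=.
symmetry; rewrite exchange_big /=.
under eq_bigr => T1 _ do rewrite exchange_big /=.
rewrite [RHS]big_mkcond /=; apply: eq_bigr => T1 _.
case: (boolP (T1 \subset S)) => T1S.
  rewrite [RHS]big_mkcond /=; apply: eq_bigr => T2 _.
  case: (boolP (T2 \subset S)) => T2S.
    rewrite (bigD1 (T1 :|: T2)) /= ?eqxx ?subUset ?T1S ?T2S // big1 ?addr0 //.
    by move=> U /andP[_ /negbTE ->].
  rewrite big1 // => U US; case: eqP => // UE; move: US T2S.
  by rewrite UE subUset => /andP[_ ->].
rewrite big1 // => T2 _; rewrite big1 // => U US; case: eqP => // UE; move: US T1S.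
by rewrite UE subUset => /andP[->].
Qed.

Lemma deg_exp k h n : deg_le k h -> deg_le (k * n) (fun S => h S ^+ n).
Proof.
move=> hk; elim: n => [|n IH].
  by rewrite muln0; apply: (deg_const 1).
rewrite mulnS; apply: (@deg_ext _ (fun S => h S * h S ^+ n)).
  by move=> S; rewrite exprS.
exact: deg_mul.
Qed.

Lemma deg_sum (J : finType) (P : pred J) k (h : J -> {set I} -> R) :
  (forall j, P j -> deg_le k (h j)) -> deg_le k (fun S => \sum_(j | P j) h j S).
Proof.
move=> hh; elim: (index_enum J) => [|j r IH].
  apply: (@deg_ext _ (fun _ => 0)); first by move=> S; rewrite big_nil.
  exact: deg_mono (deg_const 0).
case: (boolP (P j)) => Pj.
  apply: (@deg_ext _ (fun S => h j S + \sum_(j <- r | P j) h j S)).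
    by move=> S; rewrite big_cons Pj.
  exact: deg_add (hh j Pj) IH.
apply: (deg_ext _ IH) => S; by rewrite big_cons (negbTE Pj).
Qed.

Lemma alt_sum k h : deg_le k h -> (k < #|I|)%N ->
  \sum_(S : {set I}) (-1) ^+ #|S| * h S = 0.
Proof.
move=> [c [c0 hc]] kI.
under eq_bigr => S _ do rewrite hc mulr_sumr.
rewrite (exchange_big_dep predT) //=.
apply: big1 => T _.
case: (boolP (T == setT)) => [/eqP TT | nT].
  rewrite c0 ?big1 // ?TT ?cardsT // => S _; by rewrite mulr0.
have [i iT] : exists i, i \notin T.
  apply/existsP; move: nT; apply: contraR; rewrite negb_exists => /forallP H.
  by apply/eqP/setP => x; rewrite inE; move: (H x); rewrite negbK.
rewrite -mulr_suml; suff -> : \sum_(S : {set I} | T \subset S) (-1) ^+ #|S| = 0 :> R by rewrite mul0r.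
pose tog (S : {set I}) := if i \in S then S :\ i else i |: S.
have togK : involutive tog.
  move=> S; rewrite /tog; case: (boolP (i \in S)) => iS.
    by rewrite !inE eqxx /= setD1K.
  by rewrite setU11 setU1K.
rewrite (bigID (fun S : {set I} => i \in S)) /= (reindex_inj (inv_inj togK)) /=.
apply/eqP; rewrite addr_eq0; apply/eqP; rewrite -sumrN; apply: eq_big => S.
  rewrite /tog; case: (boolP (i \in S)) => iS /=.
    by rewrite setD11 !andbF.
  rewrite setU11 !andbT; apply/subsetP/subsetP => H x xT.
    by move: (H x xT); rewrite !inE; case: eqP => // xi; move: iT; rewrite -xi xT.
  by rewrite !inE H ?orbT.
move=> /andP[_]; rewrite /tog; case: (boolP (i \in S)) => iS; first by rewrite setD11.
by rewrite cardsU1 iS add1n exprS mulN1r.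
Qed.

End DegS.

Section Fp.
Variable p : nat.
Hypothesis pp : prime p.
Hypothesis op : odd p.
Local Notation F := ('F_p).

Lemma p_gt2 : (2 < p)%N.
Proof. have := prime_gt1 pp; case: p op => [|[|[|n]]] //. Qed.

Lemma fermat (x : F) : x != 0 -> x ^+ (p - 1) = 1.
Proof.
move=> x0; have := expf_card x.
have -> : #|F| = (p - 1).+1 by rewrite card_Fp //; have := p_gt2; lia.
rewrite exprS => /eqP; rewrite -[X in _ == X]mulr1 => /eqP /(mulfI x0).
by rewrite subn1 /=.
Qed.

Lemma natF0 n : ((n%:R : F) == 0) = (p %| n)%N.
Proof. by rewrite (dvdn_pcharf (pchar_Fp pp)). Qed.

Lemma fermat_nat n : (n%:R : F) ^+ (p - 1) = if (p %| n)%N then 0 else 1.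
Proof.
case: ifP => h.
  move: h; rewrite -natF0 => /eqP ->; rewrite expr0n.
  have -> : (p - 1 == 0)%N = false by apply/negbTE; have := p_gt2; lia.
  by [].
by apply: fermat; rewrite natF0 h.
Qed.

Lemma intF0 (z : int) : ((z %% p%:Z)%Z == 0) = ((z%:~R : F) == 0).
Proof.
apply/eqP/eqP => [/dvdz_mod0P|] h.
  move: h; rewrite dvdzE /= -natF0 => /eqP h.
  case: z h => n /= h; first by rewrite -pmulrn.
  by rewrite NegzE intrN -pmulrn h oppr0.
apply/dvdz_mod0P; rewrite dvdzE /= -natF0; apply/eqP.
case: z h => n /= h; first by rewrite -h -pmulrn.
by move: h; rewrite NegzE intrN -pmulrn => /eqP; rewrite oppr_eq0 => /eqP.
Qed.

Lemma binp_step k : ('C(k + p, p)%:R : F) = 'C(k, p)%:R + 1.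
Proof.
rewrite -binomial.Vandermonde natr_sum (bigD1 ord0) //= (bigD1 ord_max) //=.
rewrite big1 ?addr0.
  by rewrite subn0 bin0 binn subnn bin0 !muln1 addrC.
move=> j /andP[j0 jm]; apply/eqP; rewrite natrM mulf_eq0 !natF0; apply/orP; right.
apply: prime_dvd_bin => //.
have j0' : (0 < j)%N by rewrite lt0n; apply: contraNneq j0 => e; apply/eqP/val_inj.
have jm' : (j < p)%N.
  have := ltn_ord j; rewrite ltnS leq_eqVlt => /orP[/eqP e|//].
  by case/eqP: jm; apply/val_inj; rewrite /= e.
lia.
by apply/eqP => /(congr1 val) /= e; move: p_gt2; rewrite e.
Qed.

Lemma binp_lucas q r : (r < p)%N -> ('C(q * p + r, p)%:R : F) = q%:R.
Proof.
move=> rp; elim: q => [|q IH]; first by rewrite mul0n add0n bin_small.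
have -> : (q.+1 * p + r = (q * p + r) + p)%N by lia.
by rewrite binp_step IH -natr1.
Qed.


Lemma signp : (-1) ^+ p = -1 :> F.
Proof. by rewrite -signr_odd op expr1. Qed.

Lemma signp1 : (-1) ^+ (p - 1) = 1 :> F.
Proof.
have h : (-1) ^+ p = (-1) ^+ (p - 1).+1 :> F by congr (_ ^+ _); have := p_gt2; lia.
by move: h; rewrite signp exprS mulN1r => /eqP; rewrite eqr_opp => /eqP.
Qed.

Ltac decide_eqs := repeat match goal with
  |- context[(?a == ?b)%N] =>
     (have -> : (a == b) = true by apply/eqP; lia) ||
     (have -> : (a == b) = false by apply/negbTE/eqP; lia) end.

Definition wF (k : nat) : F :=
  3 * (1 - (k%:R : F) ^+ (p - 1)) - 2 * (1 - (k%:R + 1) ^+ (p - 1))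
  - 'C(k, p)%:R * ((k%:R + 1) ^+ (p - 1) - (k%:R : F) ^+ (p - 1)).

Lemma gval k : (k <= 4 * p - 3)%N ->
  (-1) ^+ k * wF k = 3 * (k == 0)%:R - 2 * (k == p - 1)%N%:R - 2 * (k == p)%:R
     + (k == 2 * p - 1)%N%:R + (k == 2 * p)%N%:R :> F.
Proof.
move=> kb; have p2 := p_gt2.
have [q [r [rp ek]]] : exists q r, (r < p)%N /\ k = (q * p + r)%N.
  by exists (k %/ p)%N, (k %% p)%N; split; [rewrite ltn_pmod ?prime_gt0 | apply: divn_eq].
have q3 : (q <= 3)%N by nia.
rewrite ek /wF binp_lucas // natrD natrM pchar_Fp_0 // mulr0 add0r natr1 !fermat_nat.
rewrite exprD mulnC exprM signp.
have p1 : (p == 1)%N = false by apply/negbTE/eqP; lia.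
have [->|r0] := eqVneq r 0.
  rewrite dvdn0 dvdn1 p1.
  by case: q q3 {ek} => [|[|[|[|q]]]] // _; decide_eqs; rewrite /=; ring.
have [rE|r1] := eqVneq r (p - 1)%N.
  have -> : (p %| r.+1)%N by rewrite rE (_ : (p - 1)%N.+1 = p) ?dvdnn //; lia.
  rewrite (@gtnNdvd r) ?lt0n // rE signp1.
  by case: q q3 ek => [|[|[|[|q]]]] // _ ek; decide_eqs; rewrite /=; first [ring | lia].
rewrite (@gtnNdvd r) ?lt0n // (@gtnNdvd r.+1) //; last by lia.
by case: q q3 ek => [|[|[|[|q]]]] // _ ek; decide_eqs; rewrite /=; ring.
Qed.

End Fp.

Section Main.
Variable p : nat.
Hypothesis pp : prime p.
Hypothesis op : odd p.
Local Notation F := ('F_p).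
Local Notation m := (4 * p - 3)%N.
Variable X : 'I_m -> int * int.

Lemma deg_sub (I : finType) k (h1 h2 : {set I} -> F) :
  deg_le k h1 -> deg_le k h2 -> deg_le k (fun S => h1 S - h2 S).
Proof. by move=> d1 d2; apply: deg_add d1 (deg_opp d2). Qed.

Lemma deg_card (I : finType) : deg_le 1 (fun S : {set I} => (#|S|%:R : F)).
Proof.
apply: (deg_ext _ (deg_lin (fun _ : I => (1 : F)))) => S.
by rewrite sumr_const.
Qed.

Lemma deg_bin (I : finType) j : deg_le j (fun S : {set I} => ('C(#|S|, j)%:R : F)).
Proof.
exists (fun T : {set I} => (#|T| == j)%:R); split.
  by move=> T jT; rewrite (_ : (#|T| == j) = false) //; apply/negbTE; rewrite neq_ltn jT orbT.
move=> S; rewrite -cards_draws -sumr_const big_mkcond [RHS]big_mkcond /=.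
apply: eq_bigr => T _; rewrite inE; by case: (T \subset S); case: (#|T| == j).
Qed.

Definition L1 (S : {set 'I_m}) : F := \sum_(i in S) ((X i).1)%:~R.
Definition L2 (S : {set 'I_m}) : F := \sum_(i in S) ((X i).2)%:~R.
Definition Zf S := (1 - L1 S ^+ (p - 1)) * (1 - L2 S ^+ (p - 1)).

Lemma ind_pow (x : F) : 1 - x ^+ (p - 1) = (x == 0)%:R.
Proof.
have p2 := p_gt2 pp op.
case: eqP => [->|/eqP x0]; last by rewrite fermat // subrr.
rewrite expr0n (_ : (p - 1 == 0)%N = false) ?subr0 //; apply/negbTE; lia.
Qed.

Lemma Zval S : Zf S = (zero_sum_mod p X S)%:R.
Proof.
rewrite /Zf /zero_sum_mod !intF0 // /L1 /L2 !ind_pow !mulrz_sumr.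
by case: (_ == 0); case: (_ == 0); rewrite /= ?mulr1 ?mulr0.
Qed.

Lemma deg_Zf : deg_le (p - 1 + (p - 1)) Zf.
Proof.
have dL (a : 'I_m -> F) : deg_le (p - 1) (fun S => 1 - (\sum_(i in S) a i) ^+ (p - 1)).
  apply: deg_sub; first exact: deg_mono (deg_const _ _).
  by rewrite -[X in deg_le X _]mul1n; apply: deg_exp; apply: deg_lin.
exact: deg_mul (dL _) (dL _).
Qed.

Lemma deg_w : deg_le (2 * p - 2) (fun S : {set 'I_m} => wF p #|S|).
Proof.
have p2 := p_gt2 pp op.
have dpow : forall e, deg_le e (fun S : {set 'I_m} => (#|S|%:R : F) ^+ e).
  by move=> e; rewrite -[X in deg_le X _]mul1n; apply: deg_exp; apply: deg_card.
have dA : deg_le (p - 1) (fun S : {set 'I_m} => 1 - (#|S|%:R : F) ^+ (p - 1)).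
  by apply: deg_sub; [exact: deg_mono (deg_const _ _) | exact: dpow].
have dB : deg_le (p - 1) (fun S : {set 'I_m} => 1 - ((#|S|%:R : F) + 1) ^+ (p - 1)).
  apply: deg_sub; first exact: deg_mono (deg_const _ _).
  rewrite -[X in deg_le X _]mul1n; apply: deg_exp.
  by apply: deg_add (deg_card _) (deg_mono _ (deg_const _ _)).
have dD : deg_le (p - 2) (fun S : {set 'I_m} =>
     ((#|S|%:R : F) + 1) ^+ (p - 1) - (#|S|%:R : F) ^+ (p - 1)).
  apply: (@deg_ext _ _ _ (fun S : {set 'I_m} => \sum_(i < (p - 2).+1)
      ((#|S|%:R : F) ^+ ((p - 1) - i.+1) * ('C(p - 1, i.+1))%:R))).
    move=> S; rewrite exprDn (_ : (p - 1 = (p - 2).+1)%N); last by lia.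
    rewrite [in RHS]big_ord_recl /= subn0 bin0 expr0 mulr1 mulr1n addrC addKr.
    by apply: eq_bigr => i _; rewrite expr1n mulr1 mulr_natr.
  apply: deg_sum => i _; rewrite -[X in deg_le X _]addn0.
  apply: deg_mul (deg_const _ _); apply: deg_mono (dpow _); lia.
rewrite /wF; apply: deg_sub; first apply: deg_sub.
- apply: deg_mono (deg_mul (deg_const _ 3) dA); lia.
- apply: deg_mono (deg_mul (deg_const _ 2) dB); lia.
- apply: deg_mono (deg_mul (deg_bin _ p) dD); lia.
Qed.

Lemma cnt j : \sum_(S : {set 'I_m}) (zero_sum_mod p X S)%:R * (#|S| == j)%:R
   = (nzs p j X)%:R :> F.
Proof.
rewrite /nzs -sumr_const [RHS]big_mkcond /=; apply: eq_bigr => S _.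
by rewrite inE; case: (zero_sum_mod _ _ _); case: (#|S| == j); rewrite /= ?mulr1 ?mulr0.
Qed.

Lemma nzs0 : nzs p 0 X = 1%N.
Proof.
rewrite /nzs (_ : [set S | _] = [set set0]) ?cards1 //; apply/setP => S.
rewrite !inE cards_eq0; case: eqP => [->|] //=.
by rewrite /zero_sum_mod !big_set0 !mod0z ?eqxx.
Qed.

End Main.

Unset Implicit Arguments.

Theorem corollary6 (p : nat) (X : 'I_(4 * p - 3) -> int * int) :
  prime p -> odd p ->
  ((3 - 2 * (nzs p (p - 1) X)%:Z - 2 * (nzs p p X)%:Z
      + (nzs p (2 * p - 1) X)%:Z + (nzs p (2 * p) X)%:Z) %% p%:Z)%Z = 0.
Proof.
move=> pp op; have p2 := p_gt2 pp op.
apply/eqP; rewrite intF0 //; apply/eqP.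
have H := alt_sum (deg_mul (deg_Zf X) (deg_w pp op)).
rewrite card_ord in H; have {}H := H ltac:(lia).
have E : \sum_(S : {set 'I_(4 * p - 3)}) (-1) ^+ #|S| * (Zf X S * wF p #|S|) =
   \sum_(S : {set 'I_(4 * p - 3)})
    (3 * ((zero_sum_mod p X S)%:R * (#|S| == 0)%:R)
     - 2 * ((zero_sum_mod p X S)%:R * (#|S| == p - 1)%N%:R)
     - 2 * ((zero_sum_mod p X S)%:R * (#|S| == p)%:R)
     + (zero_sum_mod p X S)%:R * (#|S| == 2 * p - 1)%N%:R
     + (zero_sum_mod p X S)%:R * (#|S| == 2 * p)%N%:R) :> 'F_p.
  apply: eq_bigr => S _; rewrite Zval // mulrCA gval //; last first.
    by have := max_card S; rewrite card_ord.
  ring.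
rewrite E !big_split /= !sumrN -!mulr_sumr !(cnt X) nzs0 in H.
rewrite !intrD !intrN !intrM -!pmulrn -H.
ring.
Qed.
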